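(* Let $B$ be a minimum-weight basis of the weighted uncertainty matroid $\mathcal{M}=(E,\mathcal{I},A,w)$ and let $Q$ be a certificate that verifies $B$. Let $e\in B$ and $e'\notin B$ with $w_e=w_{e'}$ be such that $B'=(B\setminus\{e\})\cup\{e'\}$ is independent. If each $f\in\{e,e'\}$ is either trivial or contained in $Q$, then $Q$ also verifies $B'$.
   Context: A weighted uncertainty matroid $\mathcal{M}=(E,\mathcal{I},A,w)$ consists of a matroid $M=(E,\mathcal{I})$ on a finite set $E$, for each $e\in E$ a non-empty finite union $A_e$ of bounded real intervals (each open or closed), and a weight $w_e\in A_e$. An element $e$ is trivial if $A_e=\{w_e\}$. A minimum-weight basis is a basis of $M$ minimizing the sum of weights. A weight assignment is $w^*:E\to\mathbb{R}$ with $w^*_e\in A_e$, consistent with $Q$ if $w^*_e=w_e$ for $e\in Q$. $Q$ verifies a basis $B$ (is a certificate for $B$) if for every weight assignment consistent with $Q$, $B$ is a minimum-weight basis with respect to it. *)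

(* Defs.v *)
From mathcomp Require Import all_boot all_order all_algebra.
Set Implicit Arguments. Unset Strict Implicit. Unset Printing Implicit Defensive.
Import Order.TTheory GRing.Theory Num.Theory.
Local Open Scope ring_scope.

Record matroid (E : finType) := Matroid {
  indep : {set E} -> bool;
  indep0 : indep set0;
  indep_sub : forall X Y : {set E}, X \subset Y -> indep Y -> indep X;
  indep_exch : forall X Y : {set E}, indep X -> indep Y -> (#|X| < #|Y|)%N ->
     exists2 y, y \in Y :\: X & indep (y |: X)
}.

Definition is_basis (E : finType) (M : matroid E) (B : {set E}) : Prop :=
  indep M B /\ forall X : {set E}, B \proper X -> ~~ indep M X.

Definition set_weight (E : finType) (R : numDomainType) (w : E -> R) (B : {set E}) : R :=
  \sum_(e in B) w e.

Definition min_weight_basis (E : finType) (R : numDomainType) (M : matroid E)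
    (w : E -> R) (B : {set E}) : Prop :=
  is_basis M B /\ forall B' : {set E}, is_basis M B' -> set_weight w B <= set_weight w B'.

Record bounded_itv (R : realFieldType) := BItv { itv_lo : R; itv_hi : R; itv_closed : bool }.

Definition in_bitv (R : realFieldType) (x : R) (I : bounded_itv R) : bool :=
  if itv_closed I then (itv_lo I <= x) && (x <= itv_hi I)
  else (itv_lo I < x) && (x < itv_hi I).

Definition area (R : realFieldType) := seq (bounded_itv R).

Definition in_area (R : realFieldType) (x : R) (A : area R) : bool := has (in_bitv x) A.

Definition area_nonempty (R : realFieldType) (A : area R) : Prop := exists x, in_area x A.

Record wu_matroid (E : finType) (R : realFieldType) := WUMatroid {
  wu_M : matroid E;
  wu_A : E -> area R;
  wu_w : E -> R;
  wu_A_nonempty : forall e, area_nonempty (wu_A e);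
  wu_w_in : forall e, in_area (wu_w e) (wu_A e)
}.

Definition trivial_elt (E : finType) (R : realFieldType) (U : wu_matroid E R) (e : E) : Prop :=
  forall x : R, in_area x (wu_A U e) <-> x = wu_w U e.

Definition weight_assignment (E : finType) (R : realFieldType) (U : wu_matroid E R)
    (ws : E -> R) : Prop := forall e, in_area (ws e) (wu_A U e).

Definition consistent_with (E : finType) (R : realFieldType) (U : wu_matroid E R)
    (Q : {set E}) (ws : E -> R) : Prop := forall e, e \in Q -> ws e = wu_w U e.

Definition verifies (E : finType) (R : realFieldType) (U : wu_matroid E R)
    (Q B : {set E}) : Prop :=
  forall ws : E -> R, weight_assignment U ws -> consistent_with U Q ws ->
    min_weight_basis (wu_M U) ws B.

(* Main.v *)
Require Import Defs.
From mathcomp Require Import all_boot all_order all_algebra.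
Import Order.TTheory GRing.Theory Num.Theory.
Local Open Scope ring_scope.

Theorem lemma12 (E : finType) (R : realFieldType) (U : wu_matroid E R)
    (B Q : {set E}) (e e' : E) :
  min_weight_basis (wu_M U) (wu_w U) B ->
  verifies U Q B ->
  e \in B -> e' \notin B ->
  wu_w U e = wu_w U e' ->
  indep (wu_M U) (e' |: (B :\ e)) ->
  (trivial_elt U e \/ e \in Q) ->
  (trivial_elt U e' \/ e' \in Q) ->
  verifies U Q (e' |: (B :\ e)).
Proof.
move=> _ hV eB e'B hw hI he he' ws hws hc.
have [[iB maxB] minB] := hV ws hws hc.
have hwe : ws e = wu_w U e.
  by case: he => [t|q]; [apply/t; apply: hws | apply: hc].
have hwe' : ws e' = wu_w U e'.
  by case: he' => [t|q]; [apply/t; apply: hws | apply: hc].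
have e'D : e' \notin B :\ e by rewrite in_setD1 (negbTE e'B) andbF.
have cB' : #|e' |: (B :\ e)| = #|B|.
  by rewrite cardsU1 e'D (cardsD1 e B) eB.
have wB' : set_weight ws (e' |: (B :\ e)) = set_weight ws B.
  by rewrite /set_weight big_setU1 //= (big_setD1 e eB) /= hwe' -hw -hwe.
split; last by move=> B'' hB''; rewrite wB'; apply: minB.
split=> // X hX; apply/negP => iX.
have hlt : (#|B| < #|X|)%N by rewrite -cB'; apply: proper_card.
have [y yXB iy] := indep_exch iB iX hlt.
move: yXB; rewrite inE => /andP[yB _].
apply: (negP (maxB (y |: B) _)) => //.
rewrite properEneq subsetUr andbT; apply/eqP=> h.
by move: yB; rewrite h setU11.
Qed.
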